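(* Let $\lambda$ be a strict partition, $\mu$ a toggle-symmetric distribution on $J(P^{\mathrm{shift}}_\lambda)$, and $[i,j]\in P^{\mathrm{shift}}_\lambda$. Then \[\mathbb{E}(\mu;R^{\mathrm{shift}}_{ij})=\sum_{[i',j]\in P^{\mathrm{shift}}_\lambda}\mathbb{E}(\mu;\mathcal{T}^-_{[i',j]})+\sum_{[i,j']\in P^{\mathrm{shift}}_\lambda}\mathbb{E}(\mu;\mathcal{T}^-_{[i,j']})+\sum_{\substack{i'<i\\ [i',i']\in P^{\mathrm{shift}}_\lambda}}\mathbb{E}(\mu;\mathcal{T}^-_{[i',i']})+\sum_{\substack{j'>j\\ [j',j']\in P^{\mathrm{shift}}_\lambda}}\mathbb{E}(\mu;\mathcal{T}^-_{[j',j']}).\]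
   Context: A strict partition has $\lambda_i>\lambda_{i+1}$ whenever $\lambda_i\ne0$. $P^{\mathrm{shift}}_\lambda$ is the set of boxes $[i,j]$ with $1\le i\le\ell(\lambda)$, $i\le j\le i+\lambda_i-1$, ordered by $[i,j]\le[i',j']$ iff $i\le i'$ and $j\le j'$; $J(\cdot)$ is the lattice of order ideals. For a box $p$ and order ideal $I$: $\mathcal{T}^+_p(I)=1$ iff $p\notin I$ and $p$ is minimal in $P^{\mathrm{shift}}_\lambda\setminus I$; $\mathcal{T}^-_p(I)=1$ iff $p\in I$ and $p$ is maximal in $I$ (else $0$). $\mu$ is toggle-symmetric if $\mathbb{E}(\mu;\mathcal{T}^+_p)=\mathbb{E}(\mu;\mathcal{T}^-_p)$ for all $p$. The shifted rook at $[i,j]$ is \[R^{\mathrm{shift}}_{ij}:=\sum_{\substack{i'\le i,\ j'\le j}}\mathcal{T}^+_{[i',j']}+\sum_{\substack{i'\ge i,\ j'\ge j}}\mathcal{T}^-_{[i',j']}-\sum_{\substack{i'<i,\ j'<j,\ i'<j'}}\mathcal{T}^-_{[i',j']}-\sum_{\substack{i'>i,\ j'>j,\ i'<j'}}\mathcal{T}^+_{[i',j']},\] all sums over boxes $[i',j']\in P^{\mathrm{shift}}_\lambda$. *)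

(* Defs.v *)
From HB Require Import structures.
From mathcomp Require Import all_boot all_order all_algebra.
Set Implicit Arguments. Unset Strict Implicit. Unset Printing Implicit Defensive.
Import Order.TTheory GRing.Theory Num.Theory.
Local Open Scope ring_scope.

(* Parts of lambda: la = [:: lambda_1; lambda_2; ...] (1-based in the paper,
   lambda_i = nth 0 la i.-1); missing parts are 0. *)
Definition part (la : seq nat) (i : nat) : nat := nth 0%N la i.-1.

Definition strict_partition (la : seq nat) : Prop :=
  forall i : nat, (1 <= i)%N ->
    (part la i.+1 <= part la i)%N /\ (part la i != 0%N -> (part la i.+1 < part la i)%N).

Definition ell (la : seq nat) : nat := count (fun x => x != 0%N) la.

(* a bound on all coordinates of boxes of the shifted diagram *)
Definition bnd (la : seq nat) : nat := (size la + sumn la).+1.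

Definition box_t (la : seq nat) : finType := ('I_(bnd la) * 'I_(bnd la))%type.

Definition bi {la} (p : box_t la) : nat := val p.1.
Definition bj {la} (p : box_t la) : nat := val p.2.

Definition in_shift (la : seq nat) (p : box_t la) : bool :=
  [&& 1 <= bi p, bi p <= ell la, bi p <= bj p & bj p <= bi p + part la (bi p) - 1]%N.

Definition Psh (la : seq nat) : {set box_t la} := [set p | in_shift p].

Definition ble {la} (p q : box_t la) : bool := (bi p <= bi q)%N && (bj p <= bj q)%N.

Definition is_ideal (la : seq nat) (I : {set box_t la}) : bool :=
  (I \subset Psh la) &&
  [forall q, [forall p, ((q \in I) && (p \in Psh la) && ble p q) ==> (p \in I)]].

Section Toggles.
Variable R : realFieldType.
Variable la : seq nat.

Definition Tplus (p : box_t la) (I : {set box_t la}) : R :=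
  ([&& p \in Psh la, p \notin I &
      [forall q, ((q \in Psh la) && (q \notin I) && ble q p) ==> (q == p)]] : bool)%:R.

Definition Tminus (p : box_t la) (I : {set box_t la}) : R :=
  ([&& p \in I &
      [forall q, ((q \in I) && ble p q) ==> (q == p)]] : bool)%:R.

(* a probability distribution on J(P^shift_lambda): a function on sets whose
   values on order ideals are nonnegative and sum to 1 (values off J are irrelevant) *)
Definition distribution (mu : {set box_t la} -> R) : Prop :=
  (forall I, is_ideal I -> 0 <= mu I) /\
  \sum_(I : {set box_t la} | is_ideal I) mu I = 1.

Definition Expect (mu : {set box_t la} -> R) (f : {set box_t la} -> R) : R :=
  \sum_(I : {set box_t la} | is_ideal I) mu I * f I.

Definition toggle_symmetric (mu : {set box_t la} -> R) : Prop :=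
  forall p : box_t la, p \in Psh la -> Expect mu (Tplus p) = Expect mu (Tminus p).

Definition rook_shift (p : box_t la) (I : {set box_t la}) : R :=
    \sum_(q in Psh la | (bi q <= bi p)%N && (bj q <= bj p)%N) Tplus q I
  + \sum_(q in Psh la | (bi q >= bi p)%N && (bj q >= bj p)%N) Tminus q I
  - \sum_(q in Psh la | [&& bi q < bi p, bj q < bj p & bi q < bj q]%N) Tminus q I
  - \sum_(q in Psh la | [&& bi q > bi p, bj q > bj p & bi q < bj q]%N) Tplus q I.

End Toggles.

Arguments Tplus {R la} p I.
Arguments Tminus {R la} p I.
Arguments rook_shift {R la} p I.
Arguments Expect {R la} mu f.
Arguments distribution {R la} mu.
Arguments toggle_symmetric {R la} mu.

(* Main.v *)
Require Import Defs.
From HB Require Import structures.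
From mathcomp Require Import all_boot all_order all_algebra.
From mathcomp Require Import zify ring.
Import Order.TTheory GRing.Theory Num.Theory.
Local Open Scope ring_scope.

Lemma nat_id (x y i j : nat) : (x <= y)%N -> (i <= j)%N ->
 (((x<=i) && (y<=j)) + ((i<=x) && (j<=y)) = [&& x<i, y<j & x<y] + [&& i<x, j<y & x<y] + (y==j) + (x==i) + ((x==y) && (x<i)) + ((x==y) && (x>j)))%N.
Proof. move=> *. lia. Qed.

Section S.
Variables (R : realFieldType) (la : seq nat) (mu : {set box_t la} -> R).

Lemma ExpectD f g : Expect mu (fun I => f I + g I) = Expect mu f + Expect mu g.
Proof. rewrite /Expect -big_split; apply: eq_bigr => I _; by rewrite mulrDr. Qed.

Lemma ExpectB f g : Expect mu (fun I => f I - g I) = Expect mu f - Expect mu g.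
Proof. rewrite /Expect -sumrB; apply: eq_bigr => I _; by rewrite mulrBr. Qed.

Lemma Expect_sum (P : pred (box_t la)) F :
  Expect mu (fun I => \sum_(q | P q) F q I) = \sum_(q | P q) Expect mu (F q).
Proof.
rewrite /Expect exchange_big /=; apply: eq_bigr => I _; by rewrite mulr_sumr.
Qed.

Lemma sum_cond (A : {set box_t la}) (P : pred (box_t la)) (F : box_t la -> R) :
  \sum_(q in A | P q) F q = \sum_(q in A) (P q)%:R * F q.
Proof.
rewrite big_mkcondr; apply: eq_bigr => q _; by case: (P q); rewrite ?mul1r ?mul0r.
Qed.
End S.
Arguments ExpectD {R la} mu f g.
Arguments ExpectB {R la} mu f g.
Arguments Expect_sum {R la} mu P F.
Arguments sum_cond {R la} A P F.

Theorem lemma5p3 (R : realFieldType) (la : seq nat) (Hla : strict_partition la)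
  (mu : {set box_t la} -> R) (Hmu : distribution mu)
  (Hts : toggle_symmetric mu) (p : box_t la) (Hp : p \in Psh la) :
  Expect mu (rook_shift p) =
      \sum_(q in Psh la | bj q == bj p) Expect mu (Tminus q)
    + \sum_(q in Psh la | bi q == bi p) Expect mu (Tminus q)
    + \sum_(q in Psh la | (bi q == bj q) && (bi q < bi p)%N) Expect mu (Tminus q)
    + \sum_(q in Psh la | (bi q == bj q) && (bi q > bj p)%N) Expect mu (Tminus q).
Proof.
rewrite /rook_shift.
rewrite (ExpectB mu (fun I => _ + _ - _)) (ExpectB mu (fun I => _ + _)).
rewrite (ExpectD mu (fun I => \sum_(_ in _ | _) _)).
rewrite !(Expect_sum mu (fun q => (q \in Psh la) && _)).
have HT : forall q, q \in Psh la -> Expect mu (Tplus q) = Expect mu (Tminus q) by [].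
rewrite [X in X + _ - _ - _](eq_bigr _ (fun q Hq => HT q (andP Hq).1)).
rewrite [X in _ - X](eq_bigr _ (fun q Hq => HT q (andP Hq).1)).
rewrite !sum_cond -!big_split -!sumrB /=.
apply: eq_bigr => q Hq.
have Hq' : (bi q <= bj q)%N by move: Hq; rewrite inE => /and4P[].
have Hp' : (bi p <= bj p)%N by move: Hp; rewrite inE => /and4P[].
have H := @nat_id _ _ _ _ Hq' Hp'.
have HR := congr1 (fun n : nat => n%:R : R) H.
move: HR; rewrite /= !natrD => HR.
apply/eqP; rewrite -subr_eq0; apply/eqP.
set e := Expect mu (Tminus q).
set a := (((bi q <= bi p)%N && (bj q <= bj p)%N)%:R : R) in HR *.
set b := (((bi p <= bi q)%N && (bj p <= bj q)%N)%:R : R) in HR *.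
set c := (([&& bi q < bi p, bj q < bj p & bi q < bj q]%N)%:R : R) in HR *.
set d := (([&& bi p < bi q, bj p < bj q & bi q < bj q]%N)%:R : R) in HR *.
set d1 := ((bj q == bj p)%:R : R) in HR *.
set d2 := ((bi q == bi p)%:R : R) in HR *.
set d3 := (((bi q == bj q) && (bi q < bi p)%N)%:R : R) in HR *.
set d4 := (((bi q == bj q) && (bj p < bi q)%N)%:R : R) in HR *.
have -> : a * e + b * e - c * e - d * e - (d1 * e + d2 * e + d3 * e + d4 * e)
  = ((a + b) - (c + d + d1 + d2 + d3 + d4)) * e by ring.
by rewrite HR subrr mul0r.
Qed.
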